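(* Let $M_1,M_2\in\mathbb{Z}^{r\times n}$, let $\mathcal{F}$ be the set of characteristic vectors $x\in\{0,1\}^n$ of $r$-subsets of $\{1,\dots,n\}$ that are bases of both vectorial matroids represented by $M_1$ and $M_2$ (i.e., the $r\times r$ column submatrices $M_1^x$ and $M_2^x$ indexed by the support of $x$ are both nonsingular), and let $W\in\mathbb{Z}_+^{d\times n}$. For $u\in\mathbb{Z}^d_+$ define the polynomial $g_u(a):=\sum\{\det(M_1^x)\det(M_2^x)\,a^x : x\in\mathcal{F},\ Wx=u\}$ in variables $a=(a_1,\dots,a_n)$, where $a^x=\prod_j a_j^{x_j}$, and let $U:=\{Wx:x\in\mathcal{F}\}$. Suppose independent random variables uniformly distributed on $\{1,2,\dots,s\}$ are substituted for $a_1,\dots,a_n$, and let $\widehat U:=\{u\in U: g_u(a)\ne0\}$. Then for every $u\in U$, the probability that $u\notin\widehat U$ is at most $r/s$.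
   Context: $\widehat U$ equals the support (set of exponent vectors with nonzero coefficient) of the polynomial $\det(M_1(\gamma)M_2^{\top})=\sum_{u\in U}g_u(a)b^u$ in variables $b=(b_1,\dots,b_d)$, where $M_1(\gamma)$ is the matrix whose $j$-th column is the $j$-th column of $M_1$ multiplied by $\gamma_j=a_j\prod_{i=1}^d b_i^{W_{i,j}}$. *)

(* Defs.v *)
From HB Require Import structures.
From mathcomp Require Import all_boot all_order all_algebra.
Set Implicit Arguments. Unset Strict Implicit. Unset Printing Implicit Defensive.
Import Order.TTheory GRing.Theory Num.Theory.
Local Open Scope ring_scope.

(* An r-subset S of {1..n} is encoded as S : {set 'I_n}; its characteristic
   vector is charvec S. *)
Definition charvec (n : nat) (S : {set 'I_n}) : 'cV[int]_n :=
  \col_j (j \in S)%:R.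

(* Column submatrix M^S of M : 'M_(r,n), columns indexed by the elements of S
   in increasing order (enum S follows the increasing order of 'I_n).  It is
   an r x r matrix; when #|S| = r it is exactly M^x.  (Columns beyond #|S|
   are padded with zeros, which is irrelevant as only #|S| = r is used.) *)
Definition colsubset (r n : nat) (M : 'M[int]_(r, n)) (S : {set 'I_n})
  : 'M[int]_r :=
  \matrix_(i < r, j < r)
     oapp (fun k : 'I_#|S| => M i (enum_val k)) 0 (insub (val j)).

Definition common_basis (r n : nat) (M1 M2 : 'M[int]_(r, n)) (S : {set 'I_n})
  : bool :=
  [&& #|S| == r, \det (colsubset M1 S) != 0 & \det (colsubset M2 S) != 0].

Definition Uset (r n d : nat) (M1 M2 : 'M[int]_(r, n)) (W : 'M[int]_(d, n))
  (u : 'cV[int]_d) : Prop :=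
  exists S : {set 'I_n}, common_basis M1 M2 S /\ W *m charvec S = u.

Definition g_u (r n d : nat) (M1 M2 : 'M[int]_(r, n)) (W : 'M[int]_(d, n))
  (u : 'cV[int]_d) (a : 'I_n -> int) : int :=
  \sum_(S : {set 'I_n} | common_basis M1 M2 S && (W *m charvec S == u))
     \det (colsubset M1 S) * \det (colsubset M2 S) * \prod_(j in S) a j.

(* Probability, when a_1..a_n are independent uniform on {1..s}, that
   g_u(a) = 0: the sample space is {ffun 'I_n -> 'I_s} (a_j = val (t j) + 1),
   uniform. *)
Definition prob_not_in_Uhat (r n d s : nat) (M1 M2 : 'M[int]_(r, n))
  (W : 'M[int]_(d, n)) (u : 'cV[int]_d) : rat :=
  (#|[set t : {ffun 'I_n -> 'I_s} |
       g_u M1 M2 W u (fun j => ((val (t j)).+1)%:Z) == 0]|%:R)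
  / ((s ^ n)%N%:R).

(* Main.v *)
Require Import Defs.
From HB Require Import structures.
From mathcomp Require Import all_boot all_order all_algebra.
Set Implicit Arguments. Unset Strict Implicit. Unset Printing Implicit Defensive.
Import Order.TTheory GRing.Theory Num.Theory.
Local Open Scope ring_scope.

Section SZ.
Variables (n s : nat) (a : 'I_s -> int).
Hypothesis a_inj : injective a.
Hypothesis s_gt0 : (0 < s)%N.
Local Notation T := {ffun 'I_n -> 'I_s}.

Definition ev (c : {set 'I_n} -> int) (t : T) : int :=
  \sum_(S : {set 'I_n}) c S * \prod_(i in S) a (t i).
Definition zc c : nat := (\sum_(t : T) (ev c t == 0))%N.
Definition upd (t : T) j v : T := [ffun i => if i == j then v else t i].

Lemma fiber_sum (j : 'I_n) (v0 : 'I_s) (F : T -> nat) :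
  (\sum_t F t = \sum_(t : T | t j == v0) \sum_v F (upd t j v))%N.
Proof.
rewrite (partition_big (fun t => upd t j v0) (fun t => t j == v0)) /=; last first.
  by move=> t _; rewrite ffunE eqxx.
apply: eq_bigr => t0 /eqP Ht0.
rewrite (reindex_onto (fun v => upd t0 j v) (fun t => t j)) /=; last first.
  move=> t /eqP <-; apply/ffunP => i; rewrite !ffunE.
  by case: eqP => [->|]; rewrite ?eqxx.
apply: eq_bigl => v.
apply/andP; split; last by rewrite /upd ffunE eqxx.
apply/eqP/ffunP => i; rewrite !ffunE.
by case: eqP => [->|]; rewrite ?Ht0.
Qed.

Lemma ev_upd (c : {set 'I_n} -> int) (j : 'I_n) t v : (forall S : {set 'I_n}, c S != 0 -> j \notin S) ->
  ev c (upd t j v) = ev c t.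
Proof.
move=> H; apply: eq_bigr => S _.
have [->|/H jS] := eqVneq (c S) 0; first by rewrite !mul0r.
congr (_ * _); apply: eq_bigr => i iS; rewrite ffunE.
by case: eqP => // eij; rewrite -eij iS in jS.
Qed.

Definition Qc (c : {set 'I_n} -> int) (j : 'I_n) (S : {set 'I_n}) := if j \in S then 0 else c (j |: S).
Definition Rc (c : {set 'I_n} -> int) (j : 'I_n) (S : {set 'I_n}) := if j \in S then 0 else c S.

Lemma ev_split c (j : 'I_n) t :
  ev c t = a (t j) * ev (Qc c j) t + ev (Rc c j) t.
Proof.
rewrite /ev (bigID (fun S : {set 'I_n} => j \in S)) /=; congr (_ + _); last first.
  rewrite [RHS](bigID (fun S : {set 'I_n} => j \in S)) /= [in RHS]big1 ?add0r; last first.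
    by move=> S jS; rewrite /Rc jS mul0r.
  by apply: eq_bigr => S jS; rewrite /Rc (negbTE jS).
rewrite (reindex_onto (fun S : {set 'I_n} => j |: S) (fun S : {set 'I_n} => S :\ j)) /=; last first.
  by move=> S; apply: setD1K.
rewrite big_distrr [RHS](bigID (fun S : {set 'I_n} => j \in S)) /= [in RHS]big1 ?add0r; last first.
  by move=> S jS; rewrite /Qc jS mul0r mulr0.
have E : forall S : {set 'I_n}, (j \in j |: S) && ((j |: S) :\ j == S) = (j \notin S).
  move=> S; rewrite setU11 /=; case jS: (j \in S) => /=.
    by apply/negbTE/eqP => E; move: (setD11 j (j |: S)); rewrite E jS.
  by rewrite setU1K ?jS //; apply/eqP.
rewrite (eq_bigl _ _ E); apply: eq_bigr => S jS.
by rewrite /Qc (negbTE jS) big_setU1 //= mulrCA mulrA.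
Qed.

Lemma QcP c (j : 'I_n) S : Qc c j S != 0 -> j \notin S.
Proof. by rewrite /Qc; case: ifP => //; rewrite eqxx. Qed.
Lemma RcP c (j : 'I_n) S : Rc c j S != 0 -> j \notin S.
Proof. by rewrite /Rc; case: ifP => //; rewrite eqxx. Qed.

Lemma count_lin (q r : int) : q != 0 ->
  (\sum_(v : 'I_s) (a v * q + r == 0)%R <= 1)%N.
Proof.
move=> q0.
have -> : (\sum_(v : 'I_s) (a v * q + r == 0)%R = #|[pred v | (a v * q + r == 0)%R]|)%N.
  rewrite -sum1_card [RHS]big_mkcond /=; apply: eq_bigr => v _.
  by rewrite inE; case: (_ == 0).
apply/card_le1_eqP => x y; rewrite !inE => /eqP hx /eqP hy.
apply: a_inj; apply: (mulIf q0); apply: (addIr r); by rewrite hx hy.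
Qed.

Lemma SZ_main m : forall (V : {set 'I_n}) k (c : {set 'I_n} -> int), #|V| = m ->
  (forall S, c S != 0 -> S \subset V) ->
  (forall S, c S != 0 -> (#|S| <= k)%N) -> (exists S, c S != 0) ->
  (zc c * s <= k * s ^ n)%N.
Proof.
elim: m => [|m IH] V k c hV hsupp hdeg [S0 hS0].
  move/eqP: hV; rewrite cards_eq0 => /eqP V0.
  have cS : forall S : {set 'I_n}, c S != 0 -> S = set0.
    by move=> S /hsupp; rewrite V0 subset0 => /eqP.
  have c0 : c set0 != 0 by rewrite -(cS _ hS0).
  suff -> : zc c = 0%N by [].
  rewrite /zc big1 // => t _.
  have -> : ev c t = c set0.
    rewrite /ev (bigD1 set0) //= big_set0 mulr1 big1 ?addr0 // => S SS0.
    have [->|/cS E] := eqVneq (c S) 0; first by rewrite mul0r.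
    by rewrite E eqxx in SS0.
  by rewrite (negbTE c0).
have : (0 < #|V|)%N by rewrite hV.
case/card_gt0P => j jV.
have hV' : #|V :\ j| = m by have := cardsD1 j V; rewrite jV hV; case.
have v0 : 'I_s := Ordinal s_gt0.
case: (boolP [forall S, Qc c j S == 0]) => [/forallP Q0 | ].
  apply: (IH (V :\ j)) => //; last by exists S0.
  move=> S cS.
  have jS : j \notin S.
    apply/negP => jS; have := Q0 (S :\ j).
    by rewrite /Qc setD11 setD1K // (negbTE cS).
  by rewrite subsetD1 hsupp.
rewrite negb_forall => /existsP [S1 hS1].
have jS1 := QcP hS1.
have cS1 : c (j |: S1) != 0 by move: hS1; rewrite /Qc (negbTE jS1).
have kpos : (0 < k)%N.
  by have := hdeg _ cS1; rewrite cardsU1 jS1 /= => H; apply: leq_trans H; rewrite add1n.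
have IHQ : (zc (Qc c j) * s <= k.-1 * s ^ n)%N.
  apply: (IH (V :\ j)) => //; last by exists S1.
    move=> S hS; have jS := QcP hS.
    have cS : c (j |: S) != 0 by move: hS; rewrite /Qc (negbTE jS).
    rewrite subsetD1 jS andbT; apply: subset_trans (hsupp _ cS).
    exact: subsetUr.
  move=> S hS; have jS := QcP hS.
  have cS : c (j |: S) != 0 by move: hS; rewrite /Qc (negbTE jS).
  by have := hdeg _ cS; rewrite cardsU1 jS /= add1n => H; rewrite -ltnS (ltn_predK kpos).
have F1 : zc c = (\sum_(t : T | t j == v0)
     \sum_(v : 'I_s) (a v * ev (Qc c j) t + ev (Rc c j) t == 0)%R)%N.
  rewrite /zc (fiber_sum j v0); apply: eq_bigr => t _; apply: eq_bigr => v _.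
  rewrite (ev_split c j) (ev_upd (c:=Qc c j)); last by move=> S; apply: QcP.
  rewrite (ev_upd (c:=Rc c j)); last by move=> S; apply: RcP.
  by rewrite ffunE eqxx.
have F2 : zc (Qc c j) = (\sum_(t : T | t j == v0) s * (ev (Qc c j) t == 0)%R)%N.
  rewrite /zc (fiber_sum j v0); apply: eq_bigr => t _.
  rewrite (eq_bigr (fun _ => nat_of_bool (ev (Qc c j) t == 0)%R)); last first.
    by move=> v _; rewrite (ev_upd (c:=Qc c j)) // => S; apply: QcP.
  by rewrite sum_nat_const card_ord.
set N := (\sum_(t : T | t j == v0) 1)%N.
have F3 : (s ^ n = N * s)%N.
  have -> : (s ^ n = \sum_(t : T) 1)%N.
    by rewrite sum1_card card_ffun !card_ord.
  rewrite (fiber_sum j v0) /N big_distrl /=; apply: eq_bigr => t _.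
  by rewrite sum_nat_const card_ord mul1n muln1.
have F4 : (zc c <= zc (Qc c j) + N)%N.
  rewrite F1 F2 /N -big_split /=; apply: leq_sum => t _.
  have [->|q0] := eqVneq (ev (Qc c j) t) 0.
    rewrite muln1; apply: leq_trans (leq_addr _ _).
    apply: leq_trans (_ : \sum_(v : 'I_s) 1 <= s)%N.
      by apply: leq_sum => v _; case: (_ == 0).
    by rewrite sum_nat_const card_ord muln1.
  by rewrite muln0 add0n; apply: count_lin.
have := leq_mul2r s (zc c) (zc (Qc c j) + N); rewrite F4 orbT => H.
rewrite F3 in IHQ *.
apply: leq_trans H _; rewrite mulnDl.
rewrite -[X in (_ <= X * _)%N](ltn_predK kpos) mulSn addnC leq_add2l.
exact: IHQ.
Qed.
End SZ.

Theorem proposition2 (r n d s : nat) (M1 M2 : 'M[int]_(r, n))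
  (W : 'M[int]_(d, n)) (hW : forall i j, 0 <= W i j) (hs : (0 < s)%N)
  (u : 'cV[int]_d) (hu : Uset M1 M2 W u) :
  prob_not_in_Uhat s M1 M2 W u <= (r%:R / s%:R : rat).
Proof.
pose c := fun S : {set 'I_n} =>
  if common_basis M1 M2 S && (W *m charvec S == u)
  then \det (colsubset M1 S) * \det (colsubset M2 S) else 0.
pose a := fun v : 'I_s => ((val v).+1)%:Z.
have a_inj : injective a.
  by move=> x y /eqP; rewrite /a eqz_nat eqSS => /eqP/val_inj.
have hdeg : forall S : {set 'I_n}, c S != 0 -> (#|S| <= r)%N.
  move=> S; rewrite /c; case: ifP => [/andP [/and3P [/eqP -> _ _] _]|_] //.
have hne : exists S : {set 'I_n}, c S != 0.
  case: hu => S [hcb hWS]; exists S; rewrite /c hcb hWS eqxx /=.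
  by case/and3P: hcb => _ h1 h2; rewrite mulf_neq0.
have H := @SZ_main n s a a_inj hs #|[set: 'I_n]| setT r c erefl
  (fun S _ => subsetT S) hdeg hne.
have E : #|[set t : {ffun 'I_n -> 'I_s} |
       g_u M1 M2 W u (fun j => ((val (t j)).+1)%:Z) == 0]| = zc a c.
  rewrite -sum1_card [LHS]big_mkcond /zc; apply: eq_bigr => t _.
  rewrite inE; suff -> : g_u M1 M2 W u (fun j => ((val (t j)).+1)%:Z) = ev a c t.
    by case: (_ == 0).
  rewrite /g_u /ev big_mkcond; apply: eq_bigr => S _; rewrite /c.
  by case: ifP => _ //; rewrite mul0r.
rewrite /prob_not_in_Uhat E.
have sn0 : (0 < s ^ n)%N by rewrite expn_gt0 hs.
rewrite ler_pdivrMr ?ltr0n // mulrAC ler_pdivlMr ?ltr0n // -!natrM ler_nat.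
exact: H.
Qed.
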